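(* Let $p,m,n\ge1$, let $a_1,\dots,a_n\in\mathbb{C}$ be distinct, let $m_1,\dots,m_n\ge1$ be integers, and let $C_0,\dots,C_{m-1}$, $B_k^{(j)}$ be complex $p\times p$ matrices. Let $$R(\lambda)=I\lambda^m-C_{m-1}\lambda^{m-1}-\cdots-C_1\lambda-C_0+\sum_{j=1}^{n}\sum_{k=1}^{m_j}\frac{B_k^{(j)}}{(\lambda-a_j)^k},$$ let $\|\cdot\|$ be any induced matrix norm, and define the real rational function $$q(x)=x^m-\|C_{m-1}\|x^{m-1}-\cdots-\|C_1\|x-\|C_0\|-\sum_{j=1}^n\sum_{k=1}^{m_j}\frac{\|B_k^{(j)}\|}{(x-|a_j|)^k}.$$ If $\lambda_0$ is an eigenvalue of $R(\lambda)$ and $R$ is a real zero of $q$ with $|a_j|<R$ for all $j=1,\dots,n$, then $|\lambda_0|\le R$.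
   Context: A scalar $\lambda_0\in\mathbb{C}\setminus\{a_1,\dots,a_n\}$ is an eigenvalue of $R(\lambda)$ if there is a nonzero $v\in\mathbb{C}^p$ with $R(\lambda_0)v=0$. *)

(* Defs.v *)
From HB Require Import structures.
From mathcomp Require Import all_boot all_order all_algebra.
From mathcomp Require Import complex.
From mathcomp Require Import boolp classical_sets reals.
Set Implicit Arguments. Unset Strict Implicit. Unset Printing Implicit Defensive.
Import Order.TTheory GRing.Theory Num.Theory.
Local Open Scope ring_scope.
Local Open Scope classical_set_scope.

Definition cmod (Rt : realType) (z : Rt[i]) : Rt := ComplexField.Normc.normc z.

Definition is_vnorm (Rt : realType) (p : nat) (nu : 'cV[Rt[i]]_p -> Rt) : Prop :=
  [/\ forall v, 0 <= nu v,
      forall v, nu v = 0 -> v = 0,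
      forall (c : Rt[i]) v, nu (c *: v) = cmod c * nu v
    & forall v w, nu (v + w) <= nu v + nu w].

Definition induced_norm (Rt : realType) (p : nat) (nu : 'cV[Rt[i]]_p -> Rt)
  (A : 'M[Rt[i]]_p) : Rt :=
  sup [set nu (A *m v) | v in [set v | nu v = 1]].

Definition Rmat (Rt : realType) (p m n : nat) (C : 'I_m -> 'M[Rt[i]]_p)
  (a : 'I_n -> Rt[i]) (mult : 'I_n -> nat) (B : 'I_n -> nat -> 'M[Rt[i]]_p)
  (lam : Rt[i]) : 'M[Rt[i]]_p :=
  lam ^+ m *: 1%:M - \sum_(i < m) lam ^+ i *: C i
  + \sum_(j < n) \sum_(1 <= k < (mult j).+1) ((lam - a j) ^+ k)^-1 *: B j k.

Definition is_eigenvalue (Rt : realType) (p n : nat) (a : 'I_n -> Rt[i])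
  (Rf : Rt[i] -> 'M[Rt[i]]_p) (lam0 : Rt[i]) : Prop :=
  (forall j, lam0 <> a j) /\ exists v : 'cV[Rt[i]]_p, v <> 0 /\ Rf lam0 *m v = 0.

Definition qfun (Rt : realType) (p m n : nat) (N : 'M[Rt[i]]_p -> Rt)
  (C : 'I_m -> 'M[Rt[i]]_p) (a : 'I_n -> Rt[i]) (mult : 'I_n -> nat)
  (B : 'I_n -> nat -> 'M[Rt[i]]_p) (x : Rt) : Rt :=
  x ^+ m - \sum_(i < m) N (C i) * x ^+ i
  - \sum_(j < n) \sum_(1 <= k < (mult j).+1) N (B j k) / (x - cmod (a j)) ^+ k.

(* Main.v *)
Require Import Defs.
From HB Require Import structures.
From mathcomp Require Import all_boot all_order all_algebra.
From mathcomp Require Import complex.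
From mathcomp Require Import boolp classical_sets reals.
From mathcomp Require Import topology normedtype derive.
From mathcomp Require Import lra ring.
Import Order.TTheory GRing.Theory Num.Theory.
Import numFieldNormedType.Exports.
Set Implicit Arguments. Unset Strict Implicit. Unset Printing Implicit Defensive.
Local Open Scope ring_scope.
Section Cmod.
Variable Rt : realType.
Implicit Types x y z : Rt[i].
Lemma cmod_ge0 z : 0 <= cmod z.
Proof. by case: z => a b; rewrite /cmod /= sqrtr_ge0. Qed.
Lemma cmodM x y : cmod (x * y) = cmod x * cmod y.
Proof. exact: ComplexField.Normc.normcM. Qed.
Lemma cmodD x y : cmod (x + y) <= cmod x + cmod y.
Proof. exact: le_normcD. Qed.
Lemma cmodV x : cmod x^-1 = (cmod x)^-1.
Proof. exact: ComplexField.Normc.normcV. Qed.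
Lemma cmod0 : cmod (0 : Rt[i]) = 0.
Proof. exact: ComplexField.Normc.normc0. Qed.
Lemma cmod1 : cmod (1 : Rt[i]) = 1.
Proof. exact: ComplexField.Normc.normc1. Qed.
Lemma cmodN x : cmod (- x) = cmod x.
Proof. exact: normcN. Qed.
Lemma cmod_eq0 x : cmod x = 0 -> x = 0.
Proof. exact: ComplexField.Normc.eq0_normc. Qed.
Lemma cmodX x k : cmod (x ^+ k) = cmod x ^+ k.
Proof. by elim: k => [|k IH]; rewrite ?expr0 ?cmod1 // !exprS cmodM IH. Qed.
Lemma cmodR (c : Rt) : cmod (c%:C)%C = `|c|.
Proof. by rewrite /cmod /= expr0n /= addr0 sqrtr_sqr. Qed.
Lemma cmodB x y : cmod x - cmod y <= cmod (x - y).
Proof. by rewrite lerBlDr; apply: le_trans (cmodD _ _); rewrite subrK. Qed.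
Lemma cmod_sum I (r : seq I) (P : pred I) (F : I -> Rt[i]) :
  cmod (\sum_(i <- r | P i) F i) <= \sum_(i <- r | P i) cmod (F i).
Proof.
elim/big_rec2: _ => [|i y1 y2 _ H]; first by rewrite cmod0.
by apply: le_trans (cmodD _ _) _; rewrite lerD2l.
Qed.
Lemma cmod_cplx (a b : Rt) : cmod (Complex a b) <= `|a| + `|b|.
Proof.
have -> : Complex a b = (a%:C)%C + Complex 0 b.
  by apply/eqP; rewrite eq_complex /= addr0 add0r !eqxx.
apply: le_trans (cmodD _ _) _; rewrite cmodR lerD2l.
by rewrite /cmod /= expr0n /= add0r sqrtr_sqr.
Qed.
End Cmod.
Section NormEq.
Variables (Rt : realType) (p : nat) (nu : 'cV[Rt[i]]_p -> Rt).
Hypothesis hnu : is_vnorm nu.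
Implicit Types v w : 'cV[Rt[i]]_p.

Lemma nu_ge0 v : 0 <= nu v. Proof. by case: hnu. Qed.
Lemma nu_eq0 v : nu v = 0 -> v = 0. Proof. by move=> h; case: hnu => _ /(_ v h). Qed.
Lemma nuZ c v : nu (c *: v) = cmod c * nu v. Proof. by case: hnu. Qed.
Lemma nuD v w : nu (v + w) <= nu v + nu w. Proof. by case: hnu. Qed.
Lemma nu0 : nu 0 = 0.
Proof. by rewrite -(scale0r (0 : 'cV[Rt[i]]_p)) nuZ cmod0 mul0r. Qed.
Lemma nuN v : nu (- v) = nu v.
Proof. by rewrite -scaleN1r nuZ cmodN cmod1 mul1r. Qed.
Lemma nuB v w : `|nu v - nu w| <= nu (v - w).
Proof.
have h1 := nuD (v - w) w; rewrite subrK in h1.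
have h2 := nuD (w - v) v; rewrite subrK -opprB nuN in h2.
rewrite ler_norml; apply/andP; split; lra.
Qed.
Lemma nu_sum I (r : seq I) (P : pred I) (F : I -> 'cV[Rt[i]]_p) :
  nu (\sum_(i <- r | P i) F i) <= \sum_(i <- r | P i) nu (F i).
Proof.
elim/big_rec2: _ => [|i y1 y2 _ H]; first by rewrite nu0.
by apply: le_trans (nuD _ _) _; rewrite lerD2l.
Qed.

Definition S1 w := \sum_i cmod (w i 0).
Definition KU := \sum_(i < p) nu (delta_mx i 0).

Lemma S1_ge0 w : 0 <= S1 w.
Proof. by apply: sumr_ge0 => i _; apply: cmod_ge0. Qed.
Lemma KU_ge0 : 0 <= KU.
Proof. by apply: sumr_ge0 => i _; apply: nu_ge0. Qed.
Lemma cmod_le_S1 w i : cmod (w i 0) <= S1 w.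
Proof.
rewrite /S1 (bigD1 i) //= lerDl; apply: sumr_ge0 => j _; exact: cmod_ge0.
Qed.

Lemma nu_upper w : nu w <= KU * S1 w.
Proof.
have E : w = \sum_(i < p) w i 0 *: delta_mx i 0.
  rewrite {1}(matrix_sum_delta w); apply: eq_bigr => i _; exact: big_ord1.
rewrite {1}E.
apply: le_trans; first exact: nu_sum.
rewrite /KU mulr_suml; apply: ler_sum => i _; rewrite nuZ mulrC.
apply: ler_wpM2l; [exact: nu_ge0 | exact: cmod_le_S1].
Qed.

Definition MA (A : 'M[Rt[i]]_p) := \sum_i \sum_j cmod (A i j).

Lemma MA_ge0 A : 0 <= MA A.
Proof. by apply: sumr_ge0 => i _; apply: sumr_ge0 => j _; apply: cmod_ge0. Qed.

Lemma S1_mul A u : S1 (A *m u) <= MA A * S1 u.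
Proof.
rewrite /S1 /MA mulr_suml; apply: ler_sum => i _; rewrite mxE.
apply: le_trans; first exact: cmod_sum.
rewrite mulr_suml; apply: ler_sum => j _.
rewrite cmodM; apply: ler_wpM2l; [exact: cmod_ge0 | exact: cmod_le_S1].
Qed.

End NormEq.
Section Lower.
Variables (Rt : realType) (p : nat) (nu : 'cV[Rt[i]]_p -> Rt).
Hypothesis hnu : is_vnorm nu.
Hypothesis hp : (0 < p)%N.
Local Open Scope classical_set_scope.

Definition phi (x : 'rV[Rt]_(p + p)) : 'cV[Rt[i]]_p :=
  \col_i Complex (x 0 (lshift p i)) (x 0 (rshift p i)).
Definition psi (w : 'cV[Rt[i]]_p) : 'rV[Rt]_(p + p) :=
  \row_j match split j with inl i => let: Complex a _ := w i 0 in a | inr i => let: Complex _ b := w i 0 in b end.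

Lemma phi_psi w : phi (psi w) = w.
Proof.
apply/matrixP => i j; rewrite (ord1 j) !mxE.
by rewrite (unsplitK (inl i)) (unsplitK (inr i)); case: (w i 0).
Qed.

Lemma phiB x y : phi (x - y) = phi x - phi y.
Proof. by apply/matrixP => i j; rewrite !mxE. Qed.

Lemma phiZ (c : Rt) x : phi (c *: x) = (c%:C)%C *: phi x.
Proof.
apply/matrixP => i j; rewrite !mxE /=.
by apply/eqP; rewrite eq_complex /= !mul0r subr0 addr0 !eqxx.
Qed.

Lemma phi_eq0 x : phi x = 0 -> x = 0.
Proof.
move=> /matrixP H; apply/rowP => j; rewrite -(splitK j); case: (split j) => i /=;
  by have := H i 0; rewrite !mxE => -[].
Qed.

Lemma entry_le_norm (x : 'rV[Rt]_(p+p)) j : `|x 0 j| <= `|x|.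
Proof.
have /mapP[k Hk ->] : `|x 0 j| \in [seq `|x ij.1 ij.2| | ij : 'I_1 * 'I_(p+p)].
  by apply/mapP; exists (0, j) => //=; rewrite mem_enum.
by rewrite [leRHS]/Num.norm /= mx_normrE; apply/bigmax_geP; right => /=; exists k.
Qed.

Lemma cmod_phi x i : cmod (phi x i 0) <= 2 * `|x|.
Proof.
rewrite mxE; apply: le_trans; first exact: cmod_cplx.
have := entry_le_norm x (lshift p i); have := entry_le_norm x (rshift p i).
lra.
Qed.

Lemma S1_phi x : S1 (phi x) <= p%:R * 2 * `|x|.
Proof.
rewrite /S1; apply: le_trans (ler_sum _ (fun i _ => cmod_phi x i)) _.
by rewrite sumr_const card_ord -(mulr_natl (2 * `|x|)) mulrA.
Qed.

Definition g x := nu (phi x).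

Lemma g_lip x y : `|g x - g y| <= (KU nu * (p%:R * 2) + 1) * `|x - y|.
Proof.
apply: le_trans; first exact: nuB.
rewrite -phiB; apply: le_trans; first exact: nu_upper.
have h1 := S1_phi (x - y); have h2 := KU_ge0 hnu.
have h3 : 0 <= `|x - y| by [].
have h4 : 0 <= S1 (phi (x - y)) by apply: S1_ge0.
have h5 : KU nu * S1 (phi (x - y)) <= KU nu * (p%:R * 2 * `|x - y|).
  exact: ler_wpM2l.
nra.
Qed.

Lemma g_cont : continuous g.
Proof.
have K0 : 0 < KU nu * (p%:R * 2) + 1.
  have h1 := KU_ge0 hnu; have h2 : (0:Rt) <= p%:R * 2 by rewrite mulr_ge0 // ler0n.
  have := mulr_ge0 h1 h2; lra.
move=> x; apply/(@cvgrPdist_lt _ _ _ (nbhs x) (nbhs_filter x)) => e e0.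
apply/nbhs_ballP; exists (e / (KU nu * (p%:R * 2) + 1)); first by rewrite /= divr_gt0.
move=> y; rewrite -ball_normE /ball_ /= => xy.
apply: (le_lt_trans (g_lip _ _)).
by rewrite -ltr_pdivlMl // mulrC.
Qed.

Lemma sphere_compact : compact [set x : 'rV[Rt]_(p + p) | `|x| = 1].
Proof.
apply: bounded_closed_compact.
  rewrite /bounded_set /= /bounded_near; near=> M => x /= ->; near: M; exact: nbhs_pinfty_ge.
exact: (continuous_closedP _).1 (@norm_continuous _ 'rV[Rt]_(p + p)) [set 1] (@closed_eq _ 1).
Unshelve. all: by end_near. Qed.

Lemma lower_bound : exists2 L, 0 < L & forall w, S1 w <= L * nu w.
Proof.
set S := [set x : 'rV[Rt]_(p + p) | `|x| = 1].
have S0 : S !=set0.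
  pose x0 : 'rV[Rt]_(p + p) := const_mx 1.
  have x0n : x0 != 0.
    apply/eqP => /rowP /(_ (lshift p (Ordinal hp))); rewrite !mxE.
    by apply/eqP; exact: oner_neq0.
  exists (`|x0|^-1 *: x0); rewrite /S /= normrZ ger0_norm ?invr_ge0 //.
  by rewrite mulVf // normr_eq0.
have [c cS cmin] := compact_EVT_min S0 sphere_compact (continuous_subspaceT g_cont).
rewrite inE /S /= in cS.
set m0 := g c.
have m0pos : 0 < m0.
  rewrite lt_def nu_ge0 // andbT; apply/eqP => /(nu_eq0 hnu) /phi_eq0 c0.
  have : c != 0 by rewrite -normr_eq0 cS oner_neq0.
  by rewrite c0 eqxx.
have gx : forall x, m0 * `|x| <= g x.
  move=> x; have [->|x0] := eqVneq x 0; first by rewrite normr0 mulr0 /g nu_ge0.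
  have nx : 0 < `|x| by rewrite normr_gt0.
  have := cmin (`|x|^-1 *: x).
  rewrite inE /S /= normrZ ger0_norm ?invr_ge0 // mulVf ?normr_eq0 // => /(_ erefl).
  have e : cmod ((`|x|^-1)%:C)%C = `|x|^-1.
    by rewrite (cmodR (`|x|^-1)) ger0_norm // invr_ge0 ltW.
  rewrite /g phiZ (nuZ hnu) e -/(g x) => h.
  by rewrite mulrC -ler_pdivlMl.
exists ((p%:R * 2) / m0); first by rewrite divr_gt0 // mulr_gt0 // ltr0n.
move=> w; rewrite -{1}(phi_psi w).
apply: le_trans; first exact: S1_phi.
have := gx (psi w); rewrite /g phi_psi => h.
rewrite -[leRHS]mulrA; apply: ler_wpM2l; first by rewrite mulr_ge0 // ler0n.
by rewrite ler_pdivlMl.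
Qed.
End Lower.
Section Induced.
Variables (Rt : realType) (p : nat) (nu : 'cV[Rt[i]]_p -> Rt).
Hypothesis hnu : is_vnorm nu.
Hypothesis hp : (0 < p)%N.
Local Open Scope classical_set_scope.

Lemma induced_bound (A : 'M[Rt[i]]_p) w :
  nu (A *m w) <= induced_norm nu A * nu w.
Proof.
have [L L0 HL] := lower_bound hnu hp.
have ub : ubound [set nu (A *m v) | v in [set v | nu v = 1]] (induced_norm nu A).
  apply: ub_le_sup; exists (KU nu * (MA A * L)) => y [v /= v1 <-].
  apply: le_trans; first exact: (nu_upper hnu).
  apply: ler_wpM2l; first exact: KU_ge0.
  apply: le_trans; first exact: S1_mul.
  apply: ler_wpM2l; first exact: MA_ge0.
  by have := HL v; rewrite v1 mulr1.
have [w0|wn0] := eqVneq (nu w) 0.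
  by rewrite (nu_eq0 hnu w0) mulmx0 (nu0 hnu) mulr0.
have wpos : 0 < nu w by rewrite lt_def wn0 (nu_ge0 hnu).
set c := ((nu w)^-1)%:C%C.
have e : cmod c = (nu w)^-1.
  by rewrite /c (cmodR ((nu w)^-1)) ger0_norm // invr_ge0 ltW.
have := ub (nu (A *m (c *: w))).
rewrite -scalemxAr (nuZ hnu) e => h.
rewrite -ler_pdivrMr // mulrC; apply: h.
exists (c *: w); first by rewrite /= (nuZ hnu) e mulVf.
by rewrite -scalemxAr (nuZ hnu) e.
Qed.
End Induced.
Lemma powle (Rt : realType) (a b : Rt) k : 0 <= a -> a <= b -> a ^+ k <= b ^+ k.
Proof. by move=> a0 ab; apply: lerXn2r => //; rewrite nnegrE // (le_trans a0 ab). Qed.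
Lemma invpowle (Rt : realType) (a b : Rt) k : 0 < a -> a <= b -> (b ^+ k)^-1 <= (a ^+ k)^-1.
Proof.
move=> a0 ab; rewrite lef_pV2 ?posrE ?exprn_gt0 // ?(lt_le_trans a0 ab) //.
by apply: powle => //; apply: ltW.
Qed.

Theorem theorem3p8 (Rt : realType) (p m n : nat)
  (hp : (1 <= p)%N) (hm : (1 <= m)%N) (hn : (1 <= n)%N)
  (a : 'I_n -> Rt[i]) (ha : injective a)
  (mult : 'I_n -> nat) (hmult : forall j, (1 <= mult j)%N)
  (C : 'I_m -> 'M[Rt[i]]_p) (B : 'I_n -> nat -> 'M[Rt[i]]_p)
  (nu : 'cV[Rt[i]]_p -> Rt) (hnu : is_vnorm nu)
  (lam0 : Rt[i])
  (heig : is_eigenvalue a (Rmat C a mult B) lam0)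
  (r : Rt)
  (hr : qfun (induced_norm nu) C a mult B r = 0)
  (har : forall j, cmod (a j) < r) :
  cmod lam0 <= r.
Proof.
have NB := induced_bound hnu hp.
case: heig => hne [v [v0 hv]].
have vpos : 0 < nu v.
  rewrite lt_def (nu_ge0 hnu) andbT; apply/eqP => /(nu_eq0 hnu); exact: v0.
have N0 : forall A, 0 <= induced_norm nu A.
  move=> A; have h2 := NB A v; have h1 := nu_ge0 hnu (A *m v).
  by rewrite -(pmulr_lge0 _ vpos); apply: le_trans h2.
pose j0 : 'I_n := Ordinal hn.
have r0 : 0 < r by apply: le_lt_trans (har j0); exact: cmod_ge0.
rewrite leNgt; apply/negP => rx.
have x0 : 0 < cmod lam0 by apply: lt_trans rx.
have xa : forall j, 0 < cmod lam0 - cmod (a j).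
  by move=> j; rewrite subr_gt0 (lt_trans (har j)).
have ra : forall j, 0 < r - cmod (a j) by move=> j; rewrite subr_gt0.
pose PC y := \sum_(i < m) induced_norm nu (C i) * y ^+ i.
pose PB y := \sum_(j < n) \sum_(1 <= k < (mult j).+1)
   induced_norm nu (B j k) / (y - cmod (a j)) ^+ k.
have eqv : lam0 ^+ m *: v = \sum_(i < m) lam0 ^+ i *: (C i *m v)
     - \sum_(j < n) \sum_(1 <= k < (mult j).+1) ((lam0 - a j) ^+ k)^-1 *: (B j k *m v).
  move: hv; rewrite /Rmat !mulmxDl mulNmx -scalemxAl mul1mx !mulmx_suml.
  under eq_bigr do rewrite -scalemxAl.
  under [X in _ + X]eq_bigr do rewrite mulmx_suml.
  under [X in _ + X]eq_bigr do under eq_bigr do rewrite -scalemxAl.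
  move=> h; apply/eqP; rewrite -subr_eq0; apply/eqP.
  by rewrite opprB addrA addrAC.
have ineq : cmod lam0 ^+ m * nu v <= (PC (cmod lam0) + PB (cmod lam0)) * nu v.
  rewrite -cmodX -(nuZ hnu) eqv.
  apply: le_trans; first exact: (nuD hnu).
  rewrite (nuN hnu) mulrDl; apply: lerD.
    apply: le_trans; first exact: (nu_sum hnu).
    rewrite /PC mulr_suml; apply: ler_sum => i _.
    rewrite (nuZ hnu) cmodX (mulrC (induced_norm nu (C i))) -mulrA.
    by apply: ler_wpM2l; [apply: exprn_ge0; apply: ltW | exact: NB].
  apply: le_trans; first exact: (nu_sum hnu).
  rewrite /PB mulr_suml; apply: ler_sum => j _.
  apply: le_trans; first exact: (nu_sum hnu).
  rewrite mulr_suml; apply: ler_sum => k _.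
  rewrite (nuZ hnu) cmodV cmodX.
  have h1 : (cmod (lam0 - a j) ^+ k)^-1 <= ((cmod lam0 - cmod (a j)) ^+ k)^-1.
    by apply: invpowle => //; exact: cmodB.
  apply: (le_trans (y := (cmod (lam0 - a j) ^+ k)^-1 * (induced_norm nu (B j k) * nu v))).
    apply: ler_wpM2l; last exact: NB.
    by rewrite invr_ge0 exprn_ge0 // cmod_ge0.
  rewrite mulrA (mulrC _ (induced_norm nu _)); apply: ler_wpM2r; first exact: nu_ge0.
  by apply: ler_wpM2l.
have ineq2 : cmod lam0 ^+ m <= PC (cmod lam0) + PB (cmod lam0).
  by rewrite -(ler_pM2r vpos).
have hr' : r ^+ m = PC r + PB r.
  by move/eqP: hr; rewrite /qfun subr_eq0 subr_eq addrC => /eqP.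
set x := cmod lam0 in rx x0 xa ineq2.
have key : r ^+ m.-1 * (PC x + PB x) <= x ^+ m.-1 * (PC r + PB r).
  rewrite !mulrDr; apply: lerD.
    rewrite /PC !mulr_sumr; apply: ler_sum => i _.
    have hi : (i <= m.-1)%N by rewrite -ltnS prednK.
    have hx : x ^+ i * r ^+ m.-1 <= r ^+ i * x ^+ m.-1.
      rewrite -(subnKC hi) !exprD mulrA (mulrC (x ^+ i)) -mulrA.
      apply: ler_wpM2l; first by apply: exprn_ge0; apply: ltW.
      apply: ler_wpM2l; first by apply: exprn_ge0; apply: ltW.
      by apply: powle; apply: ltW.
    rewrite mulrCA (mulrCA (x ^+ m.-1)); apply: ler_wpM2l; first exact: N0.
    by rewrite mulrC (mulrC (x ^+ m.-1)).
  rewrite /PB !mulr_sumr; apply: ler_sum => j _; rewrite !mulr_sumr.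
  apply: ler_sum => k _.
  have h1 : ((x - cmod (a j)) ^+ k)^-1 <= ((r - cmod (a j)) ^+ k)^-1.
    by apply: invpowle => //; rewrite lerD2r ltW.
  have h2 : r ^+ m.-1 <= x ^+ m.-1 by apply: powle; apply: ltW.
  rewrite mulrCA (mulrCA (x ^+ m.-1)); apply: ler_wpM2l; first exact: N0.
  apply: ler_pM => //; first by apply: exprn_ge0; apply: ltW.
  by rewrite invr_ge0 exprn_ge0 // ltW.
have h3 : r ^+ m.-1 * x ^+ m <= r ^+ m.-1 * (PC x + PB x).
  by apply: ler_wpM2l => //; apply: exprn_ge0; apply: ltW.
have := le_trans h3 key; rewrite -hr'.
have -> : m = (m.-1).+1 by rewrite prednK.
rewrite !exprS /= => h.
have P0 : 0 < r ^+ m.-1 * x ^+ m.-1 by rewrite mulr_gt0 // exprn_gt0.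
have : x * (r ^+ m.-1 * x ^+ m.-1) <= r * (r ^+ m.-1 * x ^+ m.-1).
  have E1 : r ^+ m.-1 * (x * x ^+ m.-1) = x * (r ^+ m.-1 * x ^+ m.-1) by ring.
  have E2 : x ^+ m.-1 * (r * r ^+ m.-1) = r * (r ^+ m.-1 * x ^+ m.-1) by ring.
  by rewrite -E1 -E2.
rewrite ler_pM2r // => hxr.
by move: rx; rewrite ltNge hxr.
Qed.
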